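(* Let $r,k,m$ be positive integers with $r\neq k$, and let $\alpha>\max\{k,r\}$ be real such that $\alpha-m$ is not a negative integer and $\alpha\neq m+r-j$, $\alpha\ne m+k-j$ for $j=1,\dots,m$. Then $$\sum_{n=1}^\infty\frac{H_{n+\alpha-m}}{(n+r)(n+k)}=\frac{k-\alpha}{k-r}\left\{\frac{H_{\alpha-k}^2+H_{\alpha-k}^{(2)}}{\alpha-k}-\sum_{j=1}^k\frac{H_{\alpha+j-k}}{j(\alpha+j-k)}\right\}+\frac{\alpha-r}{k-r}\left\{\frac{H_{\alpha-r}^2+H_{\alpha-r}^{(2)}}{\alpha-r}-\sum_{j=1}^r\frac{H_{\alpha+j-r}}{j(\alpha+j-r)}\right\}$$ $$-\frac{1}{k-r}\sum_{j=1}^m\left\{\frac{H_{j+\alpha-m}-H_r}{j+\alpha-m-r}-\frac{H_{j+\alpha-m}-H_k}{j+\alpha-m-k}\right\}.$$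
   Context: Shifted harmonic numbers: for a real $\alpha$ that is not a negative integer, $H_\alpha := \sum_{k=1}^\infty\left(\frac1k-\frac1{k+\alpha}\right)$ and, for integers $m\ge 2$, $H_\alpha^{(m)} := \sum_{k=1}^\infty\left(\frac1{k^m}-\frac1{(k+\alpha)^m}\right)=\zeta(m)-\zeta(m,\alpha+1)$, where $\zeta$ is the Riemann zeta function and $\zeta(s,\alpha+1)=\sum_{n=1}^\infty (n+\alpha)^{-s}$ is the Hurwitz zeta function. For nonnegative integers these are the ordinary harmonic numbers. Powers such as $H_\alpha^2$ mean $(H_\alpha)^2$. Empty sums are $0$. *)

(* Defs.v *)
From Stdlib Require Import Reals ClassicalEpsilon.
Open Scope R_scope.

(* The value of a convergent series sum_{n>=0} f n (chosen classically;
   meaningful when the series converges, which is the case for the uses below). *)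
Definition series (f : nat -> R) : R :=
  epsilon (inhabits 0) (fun l => infinite_sum f l).

(* Shifted harmonic number H_alpha = sum_{k>=1} (1/k - 1/(k+alpha)). *)
Definition Hsh (a : R) : R :=
  series (fun n => / INR (S n) - / (INR (S n) + a)).

Definition Hsh_m (m : nat) (a : R) : R :=
  series (fun n => / (INR (S n) ^ m) - / ((INR (S n) + a) ^ m)).

Fixpoint sum1 (n : nat) (f : nat -> R) : R :=
  match n with
  | O => 0
  | S p => sum1 p f + f (S p)
  end.

(* Main.v *)
Require Import Defs.
From Stdlib Require Import Reals Lra Lia Psatz ZArith ClassicalEpsilon.
From Coquelicot Require Import Coquelicot.
Open Scope R_scope.

Lemma ser_plus (a b : nat -> R) (la lb : R) : is_series a la -> is_series b lb -> is_series (fun n => a n + b n) (la + lb).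
Proof. intros; now apply (is_series_plus a b). Qed.
Lemma ser_minus (a b : nat -> R) (la lb : R) : is_series a la -> is_series b lb -> is_series (fun n => a n - b n) (la - lb).
Proof. intros; now apply (is_series_minus a b). Qed.
Lemma ser_scal (c : R) (a : nat -> R) (la : R) : is_series a la -> is_series (fun n => c * a n) (c * la).
Proof. intros; now apply (is_series_scal c a). Qed.
Lemma ser_ext (a b : nat -> R) (l : R) : (forall n, a n = b n) -> is_series a l -> is_series b l.
Proof. apply is_series_ext. Qed.

Lemma tele (b : nat -> R) (l : R) : is_lim_seq b l -> is_series (fun n => b n - b (S n)) (b O - l).
Proof.
  intro H. unfold is_series.
  assert (E : forall N, sum_n (fun n => b n - b (S n)) N = b O - b (S N)).
  { induction N. rewrite sum_O. reflexivity. rewrite sum_Sn, IHN. unfold plus; simpl. ring. }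
  assert (H2 : is_lim_seq (fun N => b O - b (S N)) (b O - l)).
  { apply is_lim_seq_minus'. apply is_lim_seq_const. now apply (is_lim_seq_incr_1 b l). }
  apply (is_lim_seq_ext _ (sum_n (fun n => b n - b (S n)))) in H2.
  exact H2. intro; now rewrite E.
Qed.

Lemma nat_big x : exists N, x < INR N.
Proof.
  destruct (archimed (Rabs x)) as [H _].
  assert (0 < up (Rabs x))%Z. { apply lt_IZR. pose proof (Rabs_pos x). simpl. lra. }
  exists (Z.to_nat (up (Rabs x))). rewrite INR_IZR_INZ, Z2Nat.id by lia.
  pose proof (RRle_abs x). lra.
Qed.

Lemma INR_S_pos n : 0 < INR (S n).
Proof. apply lt_0_INR; lia. Qed.

Lemma ex_base : ex_series (fun n => / (INR (S n) * (INR (S n) + 1))).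
Proof.
  exists (/ INR (S O) - 0).
  apply (ser_ext (fun n => / INR (S n) - / INR (S (S n)))).
  - intro n. rewrite (S_INR (S n)). pose proof (INR_S_pos n). field; lra.
  - apply (tele (fun n => / INR (S n)) 0).
    replace (Finite 0) with (Rbar_inv p_infty) by reflexivity.
    apply (is_lim_seq_inv (fun n => INR (S n))). now apply (is_lim_seq_incr_1 INR p_infty), is_lim_seq_INR.
    discriminate.
Qed.

Lemma ex_base_shift (c : R) N : ex_series (fun k => c * / (INR (S (N + k)) * (INR (S (N + k)) + 1))).
Proof.
  destruct ex_base as [l Hl].
  apply (ex_series_incr_n (fun n => c * / (INR (S n) * (INR (S n) + 1))) N).
  exists (c * l). now apply ser_scal.
Qed.

Definition Good (y : R) := forall n, INR (S n) + y <> 0.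

Lemma ex_h (y : R) : Good y -> ex_series (fun n => / INR (S n) - / (INR (S n) + y)).
Proof.
  intro G. destruct (nat_big (2 * Rabs y + 1)) as [N HN].
  apply (ex_series_incr_n _ N).
  apply (@ex_series_le R_AbsRing R_CompleteNormedModule _ (fun k => (4 * Rabs y) * / (INR (S (N + k)) * (INR (S (N + k)) + 1)))).
  2: apply ex_base_shift.
  intro k. change (norm ?x) with (Rabs x).
  set (X := INR (S (N + k))).
  assert (HX : INR N + 1 <= X). { unfold X. rewrite S_INR, plus_INR. pose proof (pos_INR k). lra. }
  assert (HZ : X / 2 <= Rabs (X + y)).
  { clear -HN HX. unfold Rabs in *; destruct (Rcase_abs (X+y)), (Rcase_abs y); lra. }
  assert (HXy : X + y <> 0) by apply G. pose proof (pos_INR N).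
  replace (/ X - / (X + y)) with (y * / (X * (X + y))).
 2:{ field. split. exact HXy. pose proof (pos_INR N). lra. }
  rewrite Rabs_mult, Rabs_inv, Rabs_mult, (Rabs_right X) by lra.
  rewrite (Rmult_comm 4 (Rabs y)), Rmult_assoc. apply Rmult_le_compat_l. apply Rabs_pos.
  assert (0 < Rabs (X + y)) by lra.
  replace (4 * / (X * (X + 1))) with (/ (X * (X + 1) / 4)) by (field; lra).
  apply Rinv_le_contravar. apply Rmult_lt_0_compat; nra. nra.
Qed.

Lemma series_spec (f : nat -> R) : ex_series f -> is_series f (series f).
Proof.
  intros [l Hl]. unfold series. apply is_series_Reals. apply epsilon_spec.
  exists l. now apply is_series_Reals.
Qed.

Lemma h_ser y : Good y -> is_series (fun n => / INR (S n) - / (INR (S n) + y)) (Hsh y).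
Proof. intro G. unfold Hsh. apply series_spec, ex_h, G. Qed.

Lemma h2_ser y : 0 < y -> is_series (fun n => / (INR (S n) ^ 2) - / ((INR (S n) + y) ^ 2)) (Hsh_m 2 y).
Proof.
  intro Hy. unfold Hsh_m. apply series_spec.
  apply (@ex_series_le R_AbsRing R_CompleteNormedModule _ (fun k => 2 * / (INR (S k) * (INR (S k) + 1)))).
  2: { destruct ex_base as [l Hl]. exists (2 * l). now apply ser_scal. }
  intro k. change (norm ?x) with (Rabs x).
  pose proof (INR_S_pos k). assert (1 <= INR (S k)) by (rewrite S_INR; pose proof (pos_INR k); lra).
  set (X := INR (S k)) in *.
  assert (A : / ((X + y) ^ 2) <= / (X ^ 2)).
  { apply Rinv_le_contravar. nra. nra. }
  assert (B : 0 < / ((X + y) ^ 2)). { apply Rinv_0_lt_compat. nra. }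
  rewrite Rabs_right by lra.
  apply Rle_trans with (/ X ^ 2). lra.
  replace (2 * / (X * (X + 1))) with (/ (X * (X + 1) / 2)) by (field; lra).
  apply Rinv_le_contravar. nra. nra.
Qed.

Lemma lim_inv_shift (y : R) : is_lim_seq (fun n => / (INR (S n) + y)) 0.
Proof.
  replace (Finite 0) with (Rbar_inv p_infty) by reflexivity.
  apply (is_lim_seq_inv (fun n => INR (S n) + y)). 2: discriminate.
  eapply is_lim_seq_plus. apply (is_lim_seq_incr_1 INR p_infty), is_lim_seq_INR.
  apply is_lim_seq_const. easy.
Qed.

Lemma Good_S y : Good y -> Good (y + 1).
Proof. intros G n. replace (INR (S n) + (y + 1)) with (INR (S (S n)) + y) by (rewrite (S_INR (S n)); ring). apply G. Qed.

Lemma h_rec y : Good y -> Hsh (y + 1) = Hsh y + / (y + 1).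
Proof.
  intro G.
  pose proof (ser_minus _ _ _ _ (h_ser _ G) (h_ser _ (Good_S _ G))) as H1.
  pose proof (tele (fun n => / (INR (S n) + y)) 0 (lim_inv_shift y)) as H2.
  apply (ser_scal (-1)) in H2.
  assert (E : forall n, -1 * (/ (INR (S n) + y) - / (INR (S (S n)) + y)) =
     (/ INR (S n) - / (INR (S n) + y)) - (/ INR (S n) - / (INR (S n) + (y + 1)))).
  { intro n. rewrite (S_INR (S n)). replace (INR (S n) + 1 + y) with (INR (S n) + (y+1)) by ring. ring. }
  apply (ser_ext _ _ _ E) in H2.
  apply is_series_unique in H1. apply is_series_unique in H2. rewrite H1 in H2.
  simpl in H2. replace (1 + y) with (y + 1) in H2 by ring. lra.
Qed.

Lemma h2_rec y : 0 < y -> Hsh_m 2 (y + 1) = Hsh_m 2 y + / ((y + 1) ^ 2).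
Proof.
  intro Hy.
  pose proof (ser_minus _ _ _ _ (h2_ser _ Hy) (h2_ser (y+1) ltac:(lra))) as H1.
  assert (L : is_lim_seq (fun n => / ((INR (S n) + y) ^ 2)) 0).
  { apply (is_lim_seq_ext (fun n => / (INR (S n) + y) * / (INR (S n) + y))).
    intro n. pose proof (INR_S_pos n). field. lra.
    replace 0 with (0 * 0) by ring. apply is_lim_seq_mult'; apply lim_inv_shift. }
  pose proof (tele (fun n => / ((INR (S n) + y) ^ 2)) 0 L) as H2.
  apply (ser_scal (-1)) in H2.
  assert (E : forall n, -1 * (/ ((INR (S n) + y) ^ 2) - / ((INR (S (S n)) + y) ^ 2)) =
     (/ (INR (S n) ^ 2) - / ((INR (S n) + y) ^ 2)) - (/ (INR (S n) ^ 2) - / ((INR (S n) + (y + 1)) ^ 2))).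
  { intro n. rewrite (S_INR (S n)). replace (INR (S n) + 1 + y) with (INR (S n) + (y+1)) by ring. ring. }
  apply (ser_ext _ _ _ E) in H2.
  apply is_series_unique in H1. apply is_series_unique in H2. rewrite H1 in H2.
  replace (INR 1 + y) with (y + 1) in H2 by (simpl; ring). lra.
Qed.

Lemma Good_add y m : Good y -> Good (y + INR m).
Proof.
  intro G; induction m. simpl. now rewrite Rplus_0_r.
  rewrite S_INR, <- Rplus_assoc. now apply Good_S.
Qed.

Lemma h_shift y m : Good y -> Hsh (y + INR m) = Hsh y + sum1 m (fun j => / (y + INR j)).
Proof.
  intro G; induction m. simpl. now rewrite Rplus_0_r, Rplus_0_r.
  cbn [sum1]. rewrite S_INR, <- Rplus_assoc, h_rec by now apply Good_add.
  rewrite IHm. ring.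
Qed.

Lemma Good_pos y : 0 <= y -> Good y.
Proof. intros H n. pose proof (INR_S_pos n). lra. Qed.

Lemma h_zero : Hsh 0 = 0.
Proof.
  pose proof (h_ser 0 (Good_pos 0 (Rle_refl 0))) as H.
  pose proof (ser_scal 0 _ _ H) as H0.
  apply (ser_ext _ (fun n => / INR (S n) - / (INR (S n) + 0))) in H0.
  2: { intro n. rewrite Rplus_0_r. ring. }
  apply is_series_unique in H. apply is_series_unique in H0. lra.
Qed.



Lemma sum1_ext n f g : (forall j, f j = g j) -> sum1 n f = sum1 n g.
Proof. intro H; induction n; simpl; auto. rewrite IHn, H. reflexivity. Qed.
Lemma sum1_plus n f g : sum1 n (fun j => f j + g j) = sum1 n f + sum1 n g.
Proof. induction n; simpl. ring. rewrite IHn. ring. Qed.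
Lemma sum1_minus n f g : sum1 n (fun j => f j - g j) = sum1 n f - sum1 n g.
Proof. induction n; simpl. ring. rewrite IHn. ring. Qed.
Lemma sum1_scal n c f : sum1 n (fun j => c * f j) = c * sum1 n f.
Proof. induction n; simpl. ring. rewrite IHn. ring. Qed.
Lemma sum1_shift n f : sum1 (S n) f = f 1%nat + sum1 n (fun i => f (S i)).
Proof. induction n. simpl. ring.
  change (sum1 (S (S n)) f) with (sum1 (S n) f + f (S (S n))). rewrite IHn.
  change (sum1 (S n) (fun i => f (S i))) with (sum1 n (fun i => f (S i)) + f (S (S n))). ring. Qed.
Lemma sum1_R0 N f : sum1 (S N) f = sum_f_R0 (fun i => f (S i)) N.
Proof. induction N. simpl. ring. simpl sum1. simpl sum_f_R0. rewrite <- IHN. reflexivity. Qed.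
Lemma sum1_le n f g : (forall j, f j <= g j) -> sum1 n f <= sum1 n g.
Proof. intro H; induction n; simpl. lra. pose proof (H (S n)). lra. Qed.

Lemma h_nat m : Hsh (INR m) = sum1 m (fun j => / INR j).
Proof.
  pose proof (h_shift 0 m (Good_pos 0 (Rle_refl 0))). rewrite Rplus_0_l, h_zero in H.
  rewrite H, Rplus_0_l. apply sum1_ext. intro; now rewrite Rplus_0_l.
Qed.

Lemma ser_lim (a : nat -> R) (l l' : R) : is_series a l -> l = l' -> is_series a l'.
Proof. intros H E; now subst. Qed.

Lemma pair_ser c t : Good c -> Good t -> c <> t ->
  is_series (fun n => / ((INR (S n) + c) * (INR (S n) + t))) ((Hsh c - Hsh t) / (c - t)).
Proof.
  intros Gc Gt ct.
  pose proof (ser_scal (/ (t - c)) _ _ (ser_minus _ _ _ _ (h_ser t Gt) (h_ser c Gc))) as H.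
  apply (ser_lim _ (/ (t - c) * (Hsh t - Hsh c))). 2:{ field. split; intro; apply ct; lra. }
  eapply ser_ext. 2: exact H.
  intro n. cbv beta. pose proof (Gc n); pose proof (Gt n). pose proof (INR_S_pos n). field. repeat split; auto; intro; lra.
Qed.

Lemma lim_cesaro : is_lim_seq (fun N => sum_f_R0 (fun i => / INR (S i)) N / INR (S N)) 0.
Proof.
  assert (H : Un_cv (fun i => / INR (S i)) 0).
  { apply is_lim_seq_Reals. 
    apply (is_lim_seq_ext (fun n => / (INR (S n) + 0))). intro; now rewrite Rplus_0_r.
    apply lim_inv_shift. }
  apply Cesaro_1 in H. apply is_lim_seq_Reals in H.
  apply (is_lim_seq_incr_1) in H. exact H.
Qed.

Lemma lim_tail a t : 0 < a -> is_lim_seq (fun N => Hsh (INR (S N) + a) * / (INR (S (S N)) + INR t)) 0.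
Proof.
  intro Ha.
  assert (Ld : is_lim_seq (fun N => / (INR (S (S N)) + INR t)) 0).
  { apply (is_lim_seq_incr_1 (fun N => / (INR (S N) + INR t)) 0), lim_inv_shift. }
  set (c := fun N => sum_f_R0 (fun i => / (a + INR (S i))) N).
  set (Hn := fun N => sum_f_R0 (fun i => / INR (S i)) N).
  apply (is_lim_seq_ext (fun N => Hsh a * / (INR (S (S N)) + INR t) + c N * / (INR (S (S N)) + INR t))).
  { intro N. rewrite (Rplus_comm _ a), h_shift by (apply Good_pos; lra).
    unfold c. rewrite sum1_R0. ring. }
  replace (Finite 0) with (Finite (0 + 0)) by (f_equal; ring).
  apply is_lim_seq_plus'.
  { replace 0 with (Hsh a * 0) by ring. apply (is_lim_seq_mult' (fun _ => Hsh a)). apply is_lim_seq_const. exact Ld. }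
  apply (is_lim_seq_le_le (fun _ => 0) _ (fun N => Hn N / INR (S N))).
  2: apply is_lim_seq_const. 2: apply lim_cesaro.
  intro N.
  assert (P1 : 0 <= c N). { unfold c. apply cond_pos_sum. intro i. apply Rlt_le, Rinv_0_lt_compat.
     pose proof (INR_S_pos i). lra. }
  assert (P2 : c N <= Hn N). { unfold c, Hn. apply sum_Rle. intros i _. pose proof (INR_S_pos i).
     apply Rinv_le_contravar; lra. }
  pose proof (INR_S_pos N). pose proof (pos_INR t).
  assert (P3 : 0 < / (INR (S (S N)) + INR t)). { apply Rinv_0_lt_compat. rewrite (S_INR (S N)). lra. }
  assert (P4 : / (INR (S (S N)) + INR t) <= / INR (S N)).
  { apply Rinv_le_contravar. lra. rewrite (S_INR (S N)). lra. }
  unfold Rdiv. split. nra.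
  apply Rle_trans with (Hn N * / (INR (S (S N)) + INR t)). nra.
  apply Rmult_le_compat_l; lra.
Qed.

Lemma hG a n : 0 < a -> Hsh (INR (S n) + a) = Hsh (INR n + a) + / (INR (S n) + a).
Proof.
  intro Ha. rewrite S_INR. replace (INR n + 1 + a) with ((INR n + a) + 1) by ring.
  apply h_rec, Good_pos. pose proof (pos_INR n). lra.
Qed.

Definition Ecl a t := Hsh a / (INR t + 1) + (Hsh a - Hsh (INR t)) / (a - INR t).

Lemma E_ser a t : 0 < a -> a <> INR t ->
  is_series (fun n => Hsh (INR (S n) + a) * (/ (INR (S n) + INR t) - / (INR (S n) + INR t + 1))) (Ecl a t).
Proof.
  intros Ha Hat.
  set (term := fun n => Hsh (INR (S n) + a) * (/ (INR (S n) + INR t) - / (INR (S n) + INR t + 1))).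
  set (q := fun n => / ((INR (S n) + a) * (INR (S n) + INR t))).
  assert (E : forall N, @eq R (sum_n term N)
     (Hsh (INR 0 + a) * / (INR 1 + INR t) + sum_n q N - Hsh (INR (S N) + a) * / (INR (S (S N)) + INR t))).
  { induction N.
    - rewrite !sum_O. unfold term, q. rewrite (hG a 0) by lra.
      pose proof (pos_INR t). simpl INR. field. repeat split; intro; lra.
    - rewrite !sum_Sn, IHN. change (plus ?x ?y) with (Rplus x y). unfold term, q.
      rewrite (hG a (S N)) by lra. rewrite (S_INR (S N)).
      pose proof (pos_INR t). pose proof (INR_S_pos N). rewrite (S_INR (S (S N))), (S_INR (S N)). pose proof (pos_INR N). pose proof (INR_S_pos 0). field. repeat split; intro; lra. }
  assert (L : is_lim_seq (sum_n term) (Ecl a t)).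
  { apply (is_lim_seq_ext _ _ _ (fun N => eq_sym (E N))).
    unfold Ecl. replace (Hsh a / (INR t + 1) + (Hsh a - Hsh (INR t)) / (a - INR t)) with
      (Hsh (INR 0 + a) * / (INR 1 + INR t) + (Hsh a - Hsh (INR t)) / (a - INR t) - 0).
    2: { simpl INR. rewrite Rplus_0_l. unfold Rdiv. rewrite (Rplus_comm 1). ring. }
    apply is_lim_seq_minus'. apply is_lim_seq_plus'. apply is_lim_seq_const.
    apply (pair_ser a (INR t)). apply Good_pos; lra. apply Good_pos, pos_INR. exact Hat.
    apply lim_tail. exact Ha. }
  exact L.
Qed.

Lemma sum1_ext_r n f g : (forall j, (1 <= j <= n)%nat -> f j = g j) -> sum1 n f = sum1 n g.
Proof. intro H; induction n; simpl; auto. rewrite IHn, H. reflexivity. lia. intros; apply H; lia. Qed.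
Lemma sum1_zero n : sum1 n (fun _ => 0) = 0.
Proof. induction n; simpl; auto. rewrite IHn; ring. Qed.

Fixpoint Wsum a s := match s with O => 0 | S p => Wsum a p + Ecl a p end.

Lemma W_ser a s : INR s < a ->
  is_series (fun n => Hsh (INR (S n) + a) * (/ INR (S n) - / (INR (S n) + INR s))) (Wsum a s).
Proof.
  induction s; intro Hs.
  - simpl Wsum. apply (ser_lim _ (0 - 0)); [|ring].
    apply (ser_ext (fun _ => 0 - 0)).
    intro n. change (INR 0) with 0. rewrite Rplus_0_r. ring.
    apply (tele (fun _ => 0) 0), is_lim_seq_const.
  - rewrite S_INR in Hs. pose proof (pos_INR s).
    assert (IH := IHs ltac:(lra)).
    pose proof (E_ser a s ltac:(lra) ltac:(intro; lra)) as HE.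
    eapply ser_ext. 2: exact (ser_plus _ _ _ _ IH HE).
    intro n. cbv beta. rewrite (S_INR s). rewrite <- (Rplus_assoc (INR (S n)) (INR s) 1). ring.
Qed.

Lemma core x s : 0 < x ->
  Hsh x / x + Hsh x - sum1 s (fun i => Hsh (x + INR i) / (INR i * (INR i + 1)))
  = Hsh (x + INR s) / (INR s + 1) + (Hsh (x + INR s) - Hsh (INR s)) / x.
Proof.
  intro Hx. induction s.
  - simpl. rewrite Rplus_0_r, h_zero. field. lra.
  - cbn [sum1]. unfold Rminus in *. rewrite Ropp_plus_distr, <- Rplus_assoc, IHs.
    rewrite S_INR. 
    assert (E1 : Hsh (x + (INR s + 1)) = Hsh (x + INR s) + / (x + INR s + 1)).
    { rewrite <- Rplus_assoc. apply h_rec, Good_pos. pose proof (pos_INR s). lra. }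
    assert (E2 : Hsh (INR s + 1) = Hsh (INR s) + / (INR s + 1)).
    { apply h_rec, Good_pos, pos_INR. }
    rewrite E1, E2. pose proof (pos_INR s). field. repeat split; intro; lra.
Qed.

Definition Pdef a s := (a - INR s) * ((Hsh (a - INR s) ^ 2 + Hsh_m 2 (a - INR s)) / (a - INR s)
   - sum1 s (fun j => Hsh (a + INR j - INR s) / (INR j * (a + INR j - INR s)))).

Lemma P_step a s : INR (S s) < a -> Pdef a s - Pdef a (S s) = Ecl a s.
Proof.
  intro Ha. rewrite S_INR in Ha. pose proof (pos_INR s) as Hs0.
  set (x := a - INR s). assert (Hx : 1 < x) by (unfold x; lra).
  set (F1 := fun i => Hsh (x + INR i) / (INR i * (x + INR i))).
  set (F2 := fun i => Hsh (x + INR i) / (INR (S i) * (x + INR i))).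
  set (F3 := fun i => Hsh (x + INR i) / (INR i * (INR i + 1))).
  assert (Z : sum1 s (fun i => x * F1 i - (x - 1) * F2 i - F3 i) = 0).
  { rewrite <- (sum1_zero s). apply sum1_ext_r. intros i Hi.
    assert (0 < INR i) by (apply lt_0_INR; lia).
    unfold F1, F2, F3. rewrite S_INR. field. repeat split; intro; lra. }
  rewrite !sum1_minus, !sum1_scal in Z.
  assert (P1 : Pdef a s = (Hsh x ^ 2 + Hsh_m 2 x) - x * sum1 s F1).
  { unfold Pdef. fold x. rewrite (sum1_ext_r s _ F1).
    field. lra. intros j _. unfold F1. replace (a + INR j - INR s) with (x + INR j) by (unfold x; ring). reflexivity. }
  assert (P2 : Pdef a (S s) = (Hsh (x - 1) ^ 2 + Hsh_m 2 (x - 1)) - (x - 1) * (Hsh x / x + sum1 s F2)).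
  { unfold Pdef. replace (a - INR (S s)) with (x - 1) by (unfold x; rewrite S_INR; ring).
    rewrite sum1_shift. rewrite (sum1_ext_r s _ F2).
    2: { intros j _. unfold F2. replace (a + INR (S j) - INR (S s)) with (x + INR j).
         reflexivity. unfold x. rewrite !S_INR. ring. }
    replace (a + INR 1 - INR (S s)) with x by (unfold x; rewrite (S_INR s); change (INR 1) with 1; ring).
    change (INR 1) with 1. field. lra. }
  assert (R1 : Hsh x = Hsh (x - 1) + / x).
  { replace x with ((x - 1) + 1) at 1 3 by ring. apply h_rec, Good_pos. lra. }
  assert (R2 : Hsh_m 2 x = Hsh_m 2 (x - 1) + / (x ^ 2)).
  { replace x with ((x - 1) + 1) at 1 3 by ring. apply h2_rec. lra. }
  pose proof (core x s ltac:(lra)) as C.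
  replace (x + INR s) with a in C by (unfold x; ring).
  fold F3 in C.
  rewrite P1, P2, R2. unfold Ecl.
  replace (a - INR s) with x by reflexivity.
  rewrite <- C.
  replace (Hsh (x - 1)) with (Hsh x - / x) by lra.
  field_simplify_eq. 2: lra.
  assert (Z' : sum1 s F3 = x * sum1 s F1 - (x - 1) * sum1 s F2) by lra.
  rewrite Z'. ring.
Qed.

Lemma P_val a s : INR s < a -> Pdef a s = (Hsh a ^ 2 + Hsh_m 2 a) - Wsum a s.
Proof.
  induction s; intro Ha.
  - unfold Pdef. simpl sum1. simpl Wsum. change (INR 0) with 0 in *. rewrite Rminus_0_r. field. intro; lra.
  - pose proof (P_step a s Ha). rewrite S_INR in Ha. rewrite IHs in H by lra.
    simpl Wsum. lra.
Qed.

Lemma ser_zero : is_series (fun _ => 0) 0.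
Proof.
  apply (ser_lim _ (0 - 0)); [|ring]. apply (ser_ext (fun _ => 0 - 0)). intro; ring.
  apply (tele (fun _ => 0) 0), is_lim_seq_const.
Qed.

Lemma ser_sum1 m (F : nat -> nat -> R) (L : nat -> R) :
  (forall j, (1 <= j <= m)%nat -> is_series (F j) (L j)) ->
  is_series (fun n => sum1 m (fun j => F j n)) (sum1 m L).
Proof.
  induction m; intro H.
  - simpl. apply ser_zero.
  - simpl. apply (ser_plus (fun n => sum1 m (fun j => F j n)) (F (S m))).
    apply IHm. intros; apply H; lia. apply H; lia.
Qed.

Lemma triple_ser c r k : Good c -> Good r -> Good k -> c <> r -> c <> k -> r <> k ->
  is_series (fun n => / ((INR (S n) + c) * (INR (S n) + r) * (INR (S n) + k)))
    (/ (k - r) * ((Hsh c - Hsh r) / (c - r) - (Hsh c - Hsh k) / (c - k))).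
Proof.
  intros Gc Gr Gk cr ck rk.
  pose proof (ser_scal (/ (k - r)) _ _ (ser_minus _ _ _ _ (pair_ser c r Gc Gr cr) (pair_ser c k Gc Gk ck))) as H.
  eapply ser_ext. 2: exact H.
  intro n. cbv beta. pose proof (Gc n); pose proof (Gr n); pose proof (Gk n).
  field. repeat split; auto; intro; apply rk; lra.
Qed.

Theorem corollary2p3 (r k m : nat) (alpha : R)
  (hr : (1 <= r)%nat) (hk : (1 <= k)%nat) (hm : (1 <= m)%nat)
  (hrk : r <> k)
  (ha : alpha > Rmax (INR k) (INR r))
  (hneg : forall j : nat, alpha - INR m <> - INR (S j))
  (hjr : forall j : nat, (1 <= j <= m)%nat -> alpha <> INR m + INR r - INR j)
  (hjk : forall j : nat, (1 <= j <= m)%nat -> alpha <> INR m + INR k - INR j) :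
  infinite_sum
    (fun n => Hsh (INR (S n) + alpha - INR m)
              / ((INR (S n) + INR r) * (INR (S n) + INR k)))
    ( (INR k - alpha) / (INR k - INR r) *
        ( (Hsh (alpha - INR k) ^ 2 + Hsh_m 2 (alpha - INR k)) / (alpha - INR k)
          - sum1 k (fun j => Hsh (alpha + INR j - INR k)
                             / (INR j * (alpha + INR j - INR k))) )
    + (alpha - INR r) / (INR k - INR r) *
        ( (Hsh (alpha - INR r) ^ 2 + Hsh_m 2 (alpha - INR r)) / (alpha - INR r)
          - sum1 r (fun j => Hsh (alpha + INR j - INR r)
                             / (INR j * (alpha + INR j - INR r))) )
    - / (INR k - INR r) *
        sum1 m (fun j =>
          (Hsh (INR j + alpha - INR m) - Hsh (INR r)) / (INR j + alpha - INR m - INR r)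
          - (Hsh (INR j + alpha - INR m) - Hsh (INR k)) / (INR j + alpha - INR m - INR k)) ).
Proof.
  assert (Hka : INR k < alpha) by (pose proof (Rmax_l (INR k) (INR r)); lra).
  assert (Hra : INR r < alpha) by (pose proof (Rmax_r (INR k) (INR r)); lra).
  assert (Hr1 : 1 <= INR r) by (apply (le_INR 1); exact hr).
  assert (Hk1 : 1 <= INR k) by (apply (le_INR 1); exact hk).
  assert (Hkr : INR k - INR r <> 0).
  { intro E. apply hrk. apply INR_eq. lra. }
  assert (goodb : forall p, (0 < p)%nat -> alpha - INR m + INR p <> 0).
  { intros p Hp E. apply (hneg (p - 1)%nat). replace (S (p - 1)) with p by lia. lra. }
  assert (HA : is_series (fun n => Hsh (INR (S n) + alpha) / ((INR (S n) + INR r) * (INR (S n) + INR k)))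
                 (/ (INR k - INR r) * (Wsum alpha k - Wsum alpha r))).
  { pose proof (ser_scal (/ (INR k - INR r)) _ _ (ser_minus _ _ _ _ (W_ser alpha k Hka) (W_ser alpha r Hra))) as H.
    eapply ser_ext. 2: exact H. intro n. cbv beta. pose proof (INR_S_pos n).
    field. repeat split; auto; intro; lra. }
  set (cj := fun j => INR j + alpha - INR m).
  set (Lj := fun j => / (INR k - INR r) * ((Hsh (cj j) - Hsh (INR r)) / (cj j - INR r) - (Hsh (cj j) - Hsh (INR k)) / (cj j - INR k))).
  assert (HB : is_series (fun n => sum1 m (fun j => / ((INR (S n) + cj j) * (INR (S n) + INR r) * (INR (S n) + INR k))))
                 (sum1 m Lj)).
  { apply (ser_sum1 m (fun j n => / ((INR (S n) + cj j) * (INR (S n) + INR r) * (INR (S n) + INR k)))).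
    intros j Hj. unfold Lj. apply triple_ser.
    - intro n. unfold cj. replace (INR (S n) + (INR j + alpha - INR m)) with (alpha - INR m + INR (S n + j)) by (rewrite plus_INR; ring).
      apply goodb; lia.
    - apply Good_pos; lra.
    - apply Good_pos; lra.
    - unfold cj. intro E. apply (hjr j Hj). lra.
    - unfold cj. intro E. apply (hjk j Hj). lra.
    - intro E. apply Hkr. lra. }
  apply is_series_Reals.
  pose proof (ser_minus _ _ _ _ HA HB) as H.
  eapply ser_lim. eapply ser_ext. 2: exact H.
  - intro n. cbv beta.
    set (y := INR (S n) + alpha - INR m).
    assert (Gy : Good y).
    { intro p. unfold y. replace (INR (S p) + (INR (S n) + alpha - INR m)) with (alpha - INR m + INR (S p + S n)) by (rewrite plus_INR; ring).
      apply goodb; lia. }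
    pose proof (h_shift y m Gy) as Hs.
    replace (y + INR m) with (INR (S n) + alpha) in Hs by (unfold y; ring).
    rewrite Hs.
    assert (E : sum1 m (fun j => / ((INR (S n) + cj j) * (INR (S n) + INR r) * (INR (S n) + INR k)))
              = / ((INR (S n) + INR r) * (INR (S n) + INR k)) * sum1 m (fun j => / (y + INR j))).
    { rewrite <- sum1_scal. apply sum1_ext_r. intros j Hj.
      assert (y + INR j <> 0).
      { unfold y. replace (INR (S n) + alpha - INR m + INR j) with (alpha - INR m + INR (S n + j)) by (rewrite plus_INR; ring).
        apply goodb; lia. }
      unfold cj. replace (INR (S n) + (INR j + alpha - INR m)) with (y + INR j) by (unfold y; ring).
      pose proof (INR_S_pos n). field. repeat split; auto; intro; lra. }
    rewrite E. unfold Rdiv. ring.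
  - pose proof (P_val alpha k Hka) as Pk. pose proof (P_val alpha r Hra) as Pr.
    unfold Pdef in Pk, Pr.
    unfold Lj, cj. rewrite sum1_scal.
    set (Qk := (Hsh (alpha - INR k) ^ 2 + Hsh_m 2 (alpha - INR k)) / (alpha - INR k)
          - sum1 k (fun j => Hsh (alpha + INR j - INR k) / (INR j * (alpha + INR j - INR k)))) in *.
    set (Qr := (Hsh (alpha - INR r) ^ 2 + Hsh_m 2 (alpha - INR r)) / (alpha - INR r)
          - sum1 r (fun j => Hsh (alpha + INR j - INR r) / (INR j * (alpha + INR j - INR r)))) in *.
    set (SS := sum1 m _).
    replace (Wsum alpha k) with (Hsh alpha ^ 2 + Hsh_m 2 alpha - (alpha - INR k) * Qk) by lra.
    replace (Wsum alpha r) with (Hsh alpha ^ 2 + Hsh_m 2 alpha - (alpha - INR r) * Qr) by lra.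
    field. exact Hkr.
Qed.
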